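(* Let $n\geq 2$, let $a,b$ be integers with $1\leq a<b\leq n$, and let $\sigma$ be an $(n-1)$-permutation. Then there exists a u-p-word for $n$-permutations of the form $\Diamond_{a,b}u_2u_3\cdots u_N$ with $\mathrm{red}(u_2u_3\cdots u_n)=\sigma$ if and only if either ($a=1$ and $\sigma=12\cdots(n-1)$) or ($b=n$ and $\sigma=(n-1)(n-2)\cdots 1$).
   Context: An $n$-permutation is a permutation $\pi_1\cdots\pi_n$ of $\{1,\ldots,n\}$. For a word $w$ of distinct numbers, $\mathrm{red}(w)$ is obtained by replacing the $i$-th smallest letter by $i$. For integers $1\leq a<b\leq n$, $\Diamond_{a,b}$ is a restricted wildcard symbol. Consider a word $u=\Diamond_{a,b}u_2u_3\cdots u_N$ with $N\geq n$ and $u_2,\ldots,u_N$ positive integers. Its factors of length $n$ are $u_iu_{i+1}\cdots u_{i+n-1}$ for $1\leq i\leq N-n+1$ (with $u_1=\Diamond_{a,b}$); each factor's integer letters must be pairwise distinct. The first factor $\Diamond_{a,b}u_2\cdots u_n$ covers exactly the $n$-permutations $\pi$ with $\pi_1\in\{a,b\}$ and $\mathrm{red}(\pi_2\cdots\pi_n)=\mathrm{red}(u_2\cdots u_n)$ (i.e., the wildcard is replaced by a value that becomes the $a$-th or $b$-th smallest entry); a factor $u_i\cdots u_{i+n-1}$ with $i\geq 2$ covers only the $n$-permutation $\mathrm{red}(u_i\cdots u_{i+n-1})$. Such a word is a u-p-word for $n$-permutations if every $n$-permutation is covered by exactly one of its length-$n$ factors. *)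

(* Defs.v *)
From mathcomp Require Import all_boot.
Set Implicit Arguments. Unset Strict Implicit. Unset Printing Implicit Defensive.

Definition is_perm (n : nat) (p : seq nat) : bool := perm_eq p (iota 1 n).

Definition red (w : seq nat) : seq nat :=
  [seq (count (fun y => y < x) w).+1 | x <- w].

(* The word is  Diamond_{a,b} u_2 ... u_N ; we store only the tail
   t = u_2 ... u_N  (so size t = N - 1, with u_k = nth 0 t (k-2)). *)

(* Factors starting at positions i >= 2: u_i ... u_{i+n-1}, for 2 <= i <= N-n+1,
   i.e. the length-n windows of t starting at offsets 0 .. size t - n. *)
Definition later_factors (n : nat) (t : seq nat) : seq (seq nat) :=
  [seq take n (drop i t) | i <- iota 0 ((size t).+1 - n)].

(* The first factor Diamond_{a,b} u_2 ... u_n covers pi iff pi_1 \in {a,b} and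
   red(pi_2 ... pi_n) = red(u_2 ... u_n). *)
Definition first_covers (n a b : nat) (t pi : seq nat) : bool :=
  ((head 0 pi == a) || (head 0 pi == b)) && (red (behead pi) == red (take n.-1 t)).

Definition cover_count (n a b : nat) (t pi : seq nat) : nat :=
  first_covers n a b t pi + count (fun w => red w == pi) (later_factors n t).

Definition upword (n a b : nat) (t : seq nat) : Prop :=
  [/\ n.-1 <= size t,                       (* N >= n *)
      all (fun x => 0 < x) t,
      uniq (take n.-1 t),
      all uniq (later_factors n t)
    & forall pi, is_perm n pi -> cover_count n a b t pi = 1].

(* Main.v *)
Require Import Defs.
From mathcomp Require Import all_boot zify.
Set Implicit Arguments. Unset Strict Implicit. Unset Printing Implicit Defensive.


Lemma size_red w : size (red w) = size w.
Proof. by rewrite size_map. Qed.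

Lemma nth_red w i : i < size w ->
  nth 0 (red w) i = (count (fun y => y < nth 0 w i) w).+1.
Proof. by move=> hi; rewrite /red (nth_map 0). Qed.

Lemma count_lt_mono x z w : x \in w -> x < z ->
  count (fun y => y < x) w < count (fun y => y < z) w.
Proof.
elim: w => //= y w IH; rewrite inE => /orP[/eqP<-|xw] xz.
  rewrite ltnn xz.
  have : count (fun y => y < x) w <= count (fun y => y < z) w.
    by apply: sub_count => u /= h; apply: ltn_trans h xz.
  lia.
have := IH xw xz; case: (ltnP y x) => h1; case: (ltnP y z) => h2 /=; lia.
Qed.

Lemma count_le_mono x z w : z <= x ->
  count (fun y => y < z) w <= count (fun y => y < x) w.
Proof. by move=> h; apply: sub_count => u /= h'; apply: leq_trans h' h. Qed.

Lemma cmp_red w i j : i < size w -> j < size w ->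
  (nth 0 (red w) i < nth 0 (red w) j) = (nth 0 w i < nth 0 w j).
Proof.
move=> hi hj; rewrite !nth_red // ltnS.
case: (ltnP (nth 0 w i) (nth 0 w j)) => h.
  by apply: count_lt_mono => //; apply: mem_nth.
by apply/negbTE; rewrite -leqNgt; apply: count_le_mono.
Qed.

Lemma count_nth (a : pred nat) u :
  count a u = count (fun j => a (nth 0 u j)) (iota 0 (size u)).
Proof. by rewrite -{1}(mkseq_nth 0 u) /mkseq count_map. Qed.

Lemma red_eq w w' : size w = size w' ->
  (forall i j, i < size w -> j < size w ->
     (nth 0 w i < nth 0 w j) = (nth 0 w' i < nth 0 w' j)) ->
  red w = red w'.
Proof.
move=> hs hc; apply: (eq_from_nth (x0:=0)); rewrite ?size_red //.
move=> i hi; rewrite !nth_red -?hs //; congr S.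
rewrite (count_nth (fun y => y < nth 0 w i)).
rewrite (count_nth (fun y => y < nth 0 w' i)) -hs.
by apply: eq_in_count => j; rewrite mem_iota /= => hj; rewrite hc.
Qed.

Lemma red_cmp w w' : red w = red w' -> size w = size w' /\
  (forall i j, i < size w -> j < size w ->
     (nth 0 w i < nth 0 w j) = (nth 0 w' i < nth 0 w' j)).
Proof.
move=> h; have hs : size w = size w' by rewrite -(size_red w) h size_red.
split=> // i j hi hj.
have hi' : i < size w' by rewrite -hs.
have hj' : j < size w' by rewrite -hs.
by rewrite -(cmp_red hi hj) -(cmp_red hi' hj') h.
Qed.

Lemma lt_size_take i k (s : seq nat) : i < size (take k s) -> i < k /\ i < size s.
Proof. by rewrite size_take; case: (ltnP k (size s)) => h hi; lia. Qed.

Lemma red_take k w : red (take k (red w)) = red (take k w).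
Proof.
apply: red_eq; first by rewrite !size_take size_red.
move=> i j /lt_size_take [hi1 hi2] /lt_size_take [hj1 hj2].
rewrite size_red in hi2 hj2.
by rewrite !nth_take // cmp_red.
Qed.

Lemma red_drop k w : red (drop k (red w)) = red (drop k w).
Proof.
apply: red_eq; first by rewrite !size_drop size_red.
move=> i j; rewrite size_drop size_red => hi hj.
rewrite !nth_drop cmp_red //; lia.
Qed.

Lemma red_red w : red (red w) = red w.
Proof. by have := red_drop 0 w; rewrite !drop0. Qed.

Lemma red_map f w : (forall x y, (f x < f y) = (x < y)) -> red (map f w) = red w.
Proof.
move=> hf; apply: red_eq; rewrite size_map // => i j hi hj.
by rewrite !(nth_map 0) // hf.
Qed.

Lemma red_rev w : red (rev w) = rev (red w).
Proof. by rewrite /red map_rev; congr rev; apply: eq_map => x; rewrite count_rev. Qed.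

Lemma count_iota_lt x m : count (fun y => y < x) (iota 1 m) = minn m x.-1.
Proof.
elim: m => [|m IH]; first by rewrite min0n.
rewrite -[m.+1]addn1 iotaD count_cat IH /=.
case: (ltnP (1 + m) x) => h /=; lia.
Qed.

Lemma is_perm_size m p : is_perm m p -> size p = m.
Proof. by move/perm_size; rewrite size_iota. Qed.

Lemma is_perm_mem m p x : is_perm m p -> (x \in p) = (0 < x <= m).
Proof. by move/perm_mem=> ->; rewrite mem_iota add1n ltnS. Qed.

Lemma is_perm_uniq m p : is_perm m p -> uniq p.
Proof. by move/perm_uniq->; apply: iota_uniq. Qed.

Lemma count_lt_perm m p x : is_perm m p -> x \in p -> count (fun y => y < x) p = x.-1.
Proof.
move=> hp hx; rewrite (permP hp) count_iota_lt.
move: hx; rewrite (is_perm_mem _ hp); lia.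
Qed.

Lemma perm_red m p : is_perm m p -> red p = p.
Proof.
move=> hp; rewrite /red; transitivity (map id p); last exact: map_id.
apply/eq_in_map => x hx /=; rewrite (count_lt_perm hp hx).
move: hx; rewrite (is_perm_mem _ hp); lia.
Qed.

Lemma perm_of_range w : uniq w -> all (fun x => 0 < x <= size w) w ->
  is_perm (size w) w.
Proof.
move=> u hall; rewrite /is_perm; apply: uniq_perm => //; first exact: iota_uniq.
have hsub : {subset w <= iota 1 (size w)}.
  by move=> x hx; rewrite mem_iota add1n ltnS; apply: (allP hall).
have hsz : size (iota 1 (size w)) <= size w by rewrite size_iota.
by case: (uniq_min_size u hsub hsz).
Qed.

Lemma red_perm w : uniq w -> is_perm (size w) (red w).
Proof.
move=> u; rewrite -(size_red w); apply: perm_of_range.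
  apply/(uniqP 0) => i j; rewrite !inE size_red => hi hj e.
  apply/eqP; apply: contraT => ne.
  have wne : nth 0 w i != nth 0 w j by rewrite nth_uniq.
  have h1 := cmp_red hi hj; have h2 := cmp_red hj hi.
  rewrite e ltnn in h1 h2.
  by move: h1 h2 wne; case: ltngtP => // ->; rewrite eqxx.
apply/allP => r /mapP [x hx ->]; rewrite size_red.
have hc := count_predC (fun y => y < x) w.
have : 0 < count (predC (fun y => y < x)) w.
  by rewrite -has_count; apply/hasP; exists x => //=; rewrite ltnn.
lia.
Qed.

Lemma red_iota m k : 0 < m -> red (iota m k) = iota 1 k.
Proof.
move=> hm; have -> : iota m k = map (addn m.-1) (iota 1 k).
  by rewrite -iotaDl addn1 prednK.
rewrite red_map; last by move=> x y; lia.
by apply: (@perm_red k); rewrite /is_perm.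
Qed.


Definition bump h x := x + (h <= x).
Definition ext h (s : seq nat) := h :: map (bump h) s.
Definition src n (p : seq nat) := red (take n.-1 p).
Definition dst (p : seq nat) := red (behead p).

Lemma bump_lt h x y : (bump h x < bump h y) = (x < y).
Proof. by rewrite /bump; case: (leqP h x) => ?; case: (leqP h y) => ? /=; lia. Qed.

Lemma bump_inj h : injective (bump h).
Proof. by move=> x y; rewrite /bump; case: (leqP h x) => ?; case: (leqP h y) => ? /=; lia. Qed.

Lemma ext_perm n h s : 0 < h <= n -> is_perm n.-1 s -> is_perm n (ext h s).
Proof.
move=> hh hs.
have hsz : size (ext h s) = n by rewrite /= size_map (is_perm_size hs); lia.
rewrite -{1}hsz; apply: perm_of_range.
  rewrite /= map_inj_uniq ?(is_perm_uniq hs) ?andbT; last exact: bump_inj.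
  apply/mapP => [[x _]]; rewrite /bump; case: (leqP h x) => ? /=; lia.
rewrite hsz /= hh; apply/allP => y /mapP [x hx ->].
move: hx; rewrite (is_perm_mem _ hs) /bump; case: (leqP h x) => ? /=; lia.
Qed.

Lemma dst_ext m h s : is_perm m s -> dst (ext h s) = s.
Proof.
move=> hs; rewrite /dst /= red_map; first exact: perm_red hs.
exact: bump_lt.
Qed.

Lemma head_ext h s : head 0 (ext h s) = h.
Proof. by []. Qed.

Lemma perm_ext_eq n pi : 0 < n -> is_perm n pi -> pi = ext (head 0 pi) (dst pi).
Proof.
move=> hn hp; case: pi hp => [|h r] hp; first by have := is_perm_size hp => /= ?; lia.
have u := is_perm_uniq hp; move: (u) => /= /andP [hr ur].
rewrite /ext /dst /= /red -map_comp; congr cons.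
transitivity (map id r); first by rewrite map_id.
apply/eq_in_map => v hv /=.
have hv' : v \in h :: r by rewrite inE hv orbT.
have e := count_lt_perm hp hv'; have rng := is_perm_mem v hp; rewrite hv' in rng.
have hvh : v != h by apply: contraNneq hr => <-.
move: e hvh; rewrite /= /bump; case: (ltnP h v) => ? /=; case: leqP => ? /=; lia.
Qed.

Lemma src_rot n p : size p = n -> 0 < n -> src n (rot 1 p) = dst p.
Proof.
case: p => [|x r] hs hn; first by move: hs => /= ?; lia.
rewrite rot1_cons /src /dst -cats1 take_size_cat //; move: hs => /= ?; lia.
Qed.

Lemma mono_perm n rho : 2 <= n -> is_perm n rho -> src n rho = dst rho ->
  rho = iota 1 n \/ rho = rev (iota 1 n).
Proof.
move=> hn hp /red_cmp [hsz hc].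
have sz := is_perm_size hp.
have hc' : forall i j, i.+1 < n -> j.+1 < n ->
    (nth 0 rho i < nth 0 rho j) = (nth 0 rho i.+1 < nth 0 rho j.+1).
  move=> i j hi hj; rewrite -!nth_behead -hc ?nth_take //; try lia.
  1,2: rewrite size_take sz; case: (ltnP n.-1 n) => ? /=; lia.
set c := nth 0 rho 0 < nth 0 rho 1.
have hall : forall i, i.+1 < n -> (nth 0 rho i < nth 0 rho i.+1) = c.
  elim=> [//|i IH] hi; rewrite -hc' //; last by lia.
  by apply: IH; lia.
have u := is_perm_uniq hp.
have hne : forall i, i.+1 < n -> nth 0 rho i != nth 0 rho i.+1.
  by move=> i hi; rewrite nth_uniq // ?sz //; lia.
case hcc: c in hall.
  left; apply: (irr_sorted_eq ltn_trans ltnn).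
  - by apply/(sortedP 0) => i; rewrite sz => hi; rewrite hall.
  - exact: iota_ltn_sorted.
  - exact: perm_mem.
right; rewrite -[rho]revK; congr rev.
apply: (irr_sorted_eq ltn_trans ltnn).
- rewrite rev_sorted; apply/(sortedP 0) => i; rewrite sz => hi /=.
  have := hall i hi; have := hne i hi; case: ltngtP => //.
- exact: iota_ltn_sorted.
- by move=> x; rewrite mem_rev; apply: perm_mem.
Qed.


Definition PP n := permutations (iota 1 n).

Lemma memPP n pi : (pi \in PP n) = is_perm n pi.
Proof. by rewrite mem_permutations. Qed.

Lemma PP_uniq n : uniq (PP n).
Proof. exact: permutations_uniq. Qed.

Lemma LF_size n t w : w \in later_factors n t -> size w = n.
Proof.
case/mapP => i; rewrite mem_iota => /andP [_ hi] ->.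
rewrite size_take size_drop; case: (ltnP n (size t - i)) => ? /=; lia.
Qed.

Lemma window_chain n (t : seq nat) i : 0 < n ->
  behead (take n (drop i t)) = take n.-1 (take n (drop i.+1 t)).
Proof.
move=> hn; rewrite take_takel; last by lia.
have -> : drop i.+1 t = behead (drop i t) by rewrite -drop1 drop_drop ?addn1 ?add1n.
by case: n hn => // m _; case: (drop i t).
Qed.

Lemma iota_rcons m k : iota m k.+1 = rcons (iota m k) (m + k).
Proof. by rewrite -cats1 (_ : [:: m + k] = iota (m + k) 1) // -iotaD addn1. Qed.

Lemma count_chain (P Q : pred nat) m : (forall i, i.+1 < m -> P i.+1 -> Q i) ->
  count P (iota 0 m) <= 1 + count Q (iota 0 m).
Proof.
suff H : forall m, (forall i, i.+1 < m -> P i.+1 -> Q i) ->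
    count P (iota 0 m) <= 1 + count Q (iota 0 m.-1).
  move=> h; apply: leq_trans (H m h) _; rewrite leq_add2l.
  case: m h => // m _; rewrite (_ : m.+1.-1 = m) // iota_rcons -cats1 count_cat; lia.
move=> {m}; elim=> [|m IH] h; first by [].
have IH' := IH (fun i hi => h i (leqW hi)).
rewrite iota_rcons -cats1 count_cat /= add0n addn0.
case: m IH IH' h => [|k] IH IH' h; first by rewrite /=; case: (P 0).
rewrite (_ : k.+1.-1 = k) // in IH'.
have e : count Q (iota 0 k.+1) = count Q (iota 0 k) + Q k.
  by rewrite iota_rcons -cats1 count_cat /= addn0.
move: IH'; rewrite e.
by case: (P k.+1) (h k (ltnSn k.+1)) => [-> | _] //= ?; lia.
Qed.

Lemma count_pred1_and (T : eqType) (s : seq T) x (b : pred T) : uniq s -> x \in s ->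
  count (fun y => (y == x) && b y) s = b x.
Proof.
elim: s => //= y s IH /andP [ys us]; rewrite inE => /orP [/eqP -> | xs].
  rewrite eqxx /=.
  have : count (fun z => (z == y) && b z) s <= count_mem y s.
    by apply: sub_count => z /andP [].
  rewrite (count_memPn ys); case: (b y) => /=; lia.
have -> : (y == x) = false by apply/negbTE; apply: contraNneq ys => ->.
by rewrite /= IH.
Qed.

Lemma map_red_perm n (W : seq (seq nat)) (fc : pred (seq nat)) :
  (forall w, w \in W -> red w \in PP n) ->
  (forall pi, pi \in PP n -> count (fun w => red w == pi) W = ~~ fc pi) ->
  perm_eq (map red W) (filter (predC fc) (PP n)).
Proof.
move=> hW hc; rewrite /perm_eq; apply/allP => x; rewrite mem_cat => hx.
have xP : x \in PP n.
  case/orP: hx => [/mapP [w hw ->] | ]; [exact: hW | by rewrite mem_filter => /andP []].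
rewrite /= count_map count_filter.
rewrite (eq_count (a2 := fun w => red w == x)) //.
rewrite hc // (eq_count (a2 := fun y => (y == x) && predC fc y)); last by [].
by rewrite count_pred1_and ?PP_uniq.
Qed.

Lemma perm_rot1 n : perm_eq (PP n) (map (rot 1) (PP n)).
Proof.
apply: uniq_perm; first exact: PP_uniq.
  rewrite map_inj_uniq ?PP_uniq //; exact: rot_inj.
move=> p; apply/idP/idP => [hp | /mapP [q hq ->]].
  apply/mapP; exists (rotr 1 p); last by rewrite rotrK.
  by rewrite memPP /is_perm perm_rotr -/(is_perm n p) -memPP.
by rewrite memPP /is_perm perm_rot -/(is_perm n q) -memPP.
Qed.

Lemma src_red n w : src n (red w) = src n w.
Proof. exact: red_take. Qed.

Lemma dst_red w : dst (red w) = dst w.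
Proof. by rewrite /dst -!drop1 red_drop. Qed.

Lemma forward n a b t : 2 <= n -> 1 <= a -> a < b -> b <= n -> upword n a b t ->
  (a = 1 /\ red (take n.-1 t) = iota 1 n.-1) \/
  (b = n /\ red (take n.-1 t) = rev (iota 1 n.-1)).
Proof.
move=> hn ha hab hb [hsz hpos hu1 hu2 hcov].
set sigma := red (take n.-1 t).
have hsig : is_perm n.-1 sigma.
  by have := red_perm hu1; rewrite size_takel.
set W := later_factors n t.
set fc := first_covers n a b t.
have hW : forall w, w \in W -> red w \in PP n.
  move=> w hw; rewrite memPP -(LF_size hw); apply: red_perm; exact: (allP hu2).
have hc : forall pi, pi \in PP n -> count (fun w => red w == pi) W = ~~ fc pi.
  move=> pi; rewrite memPP => /hcov; rewrite /cover_count -/fc -/W.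
  by case: (fc pi) => /=; lia.
have hperm := map_red_perm hW hc.
have cntX : forall X : pred (seq nat),
    count (fun w => X (red w)) W = count (fun pi => X pi && ~~ fc pi) (PP n).
  by move=> X; rewrite -(count_map red X) (permP hperm) count_filter.
have hchain : count (fun w => src n (red w) == sigma) W <=
              1 + count (fun w => dst (red w) == sigma) W.
  rewrite /W /later_factors !count_map.
  apply: count_chain => i hi /=.
  by rewrite src_red dst_red /dst window_chain //; lia.
have hout : count (fun w => src n (red w) == sigma) W =
    count (fun pi => (dst pi == sigma) && ~~ fc (rot 1 pi)) (PP n).
  rewrite (cntX (fun pi => src n pi == sigma)) (permP (perm_rot1 n)) count_map.
  apply: eq_in_count => pi hpi /=; rewrite src_rot //; last by lia.
  by rewrite memPP in hpi; exact: is_perm_size hpi.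
have hin : count (fun w => dst (red w) == sigma) W =
    count (fun pi => (dst pi == sigma) && ~~ fc pi) (PP n).
  exact: (cntX (fun pi => dst pi == sigma)).
case: (boolP (has (fun pi => (dst pi == sigma) && fc (rot 1 pi)) (PP n))).
  case/hasP => pi hpi /andP [hd hf].
  have hrho : is_perm n (rot 1 pi) by rewrite /is_perm perm_rot -/(is_perm n pi) -memPP.
  move: hf; rewrite /fc /first_covers -/sigma => /andP [hh /eqP hd2].
  have hsrc : src n (rot 1 pi) = dst (rot 1 pi).
    rewrite src_rot; first by rewrite (eqP hd) /dst hd2.
      by rewrite memPP in hpi; exact: is_perm_size hpi.
    by lia.
  set m := n.-1 in hsig *; have hnm : n = m.+1 by rewrite /m; lia.
  case: (mono_perm hn hrho hsrc) => e; rewrite e hnm in hh hd2.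
    left; rewrite -hd2 /= red_iota //; split=> //.
    by move: hh => /= /orP [] /eqP; lia.
  right; move: hh hd2; rewrite iota_rcons rev_rcons /= => hh <-.
  rewrite red_rev red_iota //; split; last by [].
  by move: hh => /orP [] /eqP; lia.
move=> hnot.
have hout' : count (fun pi => (dst pi == sigma) && ~~ fc (rot 1 pi)) (PP n) =
             count (fun pi => dst pi == sigma) (PP n).
  apply: eq_in_count => pi hpi /=; have := hasPn hnot pi hpi.
  by case: (dst pi == sigma) => //=; case: (fc (rot 1 pi)).
have hsplit := count_predC fc (filter (fun pi => dst pi == sigma) (PP n)).
rewrite !count_filter size_filter in hsplit.
have e2 : count (predI (predC fc) (fun pi => dst pi == sigma)) (PP n) =
          count (fun pi => (dst pi == sigma) && ~~ fc pi) (PP n).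
  by apply: eq_count => pi /=; rewrite andbC.
have h2 : 2 <= count (predI fc (fun pi => dst pi == sigma)) (PP n).
  rewrite -size_filter.
  have da : red (behead (ext a sigma)) = sigma := dst_ext a hsig.
  have db : red (behead (ext b sigma)) = sigma := dst_ext b hsig.
  have pa : ext a sigma \in PP n by rewrite memPP; apply: ext_perm => //; lia.
  have pb : ext b sigma \in PP n by rewrite memPP; apply: ext_perm => //; lia.
  apply: (@uniq_leq_size _ [:: ext a sigma; ext b sigma]).
    rewrite /= inE andbT; apply/eqP => e; have := congr1 (head 0) e; rewrite /=; lia.
  move=> x; rewrite !inE => /orP [] /eqP ->; rewrite mem_filter /= /fc /first_covers -/sigma.
    by rewrite /dst da /= !eqxx pa.
  by rewrite /dst db /= !eqxx orbT pb.
exfalso; lia.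
Qed.


Section Euler.
Variables (T V : eqType) (src dst : T -> V).
Definition er (e f : T) := dst e == src f.
Definition balanced (F : seq T) :=
  forall v, count (fun e => src e == v) F = count (fun e => dst e == v) F.
Definition conn (E : seq T) := forall A : pred V,
  (exists2 g, g \in E & A (src g)) -> (exists2 g, g \in E & ~~ A (src g)) ->
  exists2 g, g \in E & A (src g) != A (dst g).

Lemma path_count x p v : path er x p ->
  count (fun e => src e == v) (x :: p) + (dst (last x p) == v) =
  count (fun e => dst e == v) (x :: p) + (src x == v).
Proof.
elim: p x => [|y p IH] x /=; first by lia.
case/andP => /eqP hxy hp.
by have := IH y hp; rewrite /= -hxy; lia.
Qed.

Lemma cycle_balanced c : cycle er c -> balanced c.
Proof.
case: c => // x p /= hc v.
by have := path_count v hc; rewrite last_rcons /= -cats1 !count_cat /=; lia.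
Qed.

Lemma count_sub_uniq (a : pred T) s1 s2 : uniq s1 -> {subset s1 <= s2} ->
  count a s1 <= count a s2.
Proof.
move=> u sub; rewrite -!size_filter; apply: uniq_leq_size; first exact: filter_uniq.
by move=> x; rewrite !mem_filter => /andP [-> /sub ->].
Qed.

Lemma count_split (a b : pred T) s :
  count a s = count (fun x => a x && b x) s + count (fun x => a x && ~~ b x) s.
Proof. by elim: s => //= x s ->; case: (a x); case: (b x) => /=; lia. Qed.

Lemma count_in_sub (a : pred T) (c E : seq T) : uniq c -> uniq E -> {subset c <= E} ->
  count (fun x => a x && (x \in c)) E = count a c.
Proof.
move=> uc uE sub.
have hp : perm_eq (filter (fun x => x \in c) E) c.
  apply: uniq_perm => //; first exact: filter_uniq.
  move=> x; rewrite mem_filter; apply/andP/idP => [[]//|h]; split=> //; exact: sub.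
by rewrite -(permP hp) count_filter.
Qed.

Lemma full_perm (c E : seq T) : uniq c -> uniq E -> {subset c <= E} -> size E <= size c ->
  perm_eq c E.
Proof.
move=> uc uE sub hs; apply: uniq_perm => //.
by case: (uniq_min_size uc sub hs).
Qed.

Lemma extend (F : seq T) e q : balanced F -> uniq F -> path er e q -> uniq (e :: q) ->
  {subset e :: q <= F} -> dst (last e q) != src e ->
  exists2 f, f \in F & (f \notin e :: q) && (src f == dst (last e q)).
Proof.
move=> hb hu hp hq hs hop; set w := dst (last e q).
have hc := path_count w hp.
have hsw : (src e == w) = false by rewrite eq_sym; apply: negbTE.
rewrite eqxx hsw in hc.
have h1 : count (fun e => dst e == w) (e :: q) <= count (fun e => dst e == w) F.
  exact: count_sub_uniq.
rewrite -(hb w) in h1.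
have : has (fun f => (f \notin e :: q) && (src f == w)) F.
  apply: contraT => hn.
  have hsub : {subset filter (fun f => src f == w) F <=
                      filter (fun f => src f == w) (e :: q)}.
    move=> x; rewrite !mem_filter => /andP [hx xF]; rewrite hx /=.
    by have := hasPn hn x xF; rewrite hx andbT negbK.
  have := uniq_leq_size (filter_uniq _ hu) hsub.
  by rewrite !size_filter; lia.
by case/hasP => f hf hf'; exists f.
Qed.

Lemma closed_through (F : seq T) e : balanced F -> uniq F -> e \in F ->
  exists q, [/\ cycle er (e :: q), uniq (e :: q) & {subset e :: q <= F}].
Proof.
move=> hb hu he.
suff H : forall k q, size F - size q <= k -> path er e q -> uniq (e :: q) ->
    {subset e :: q <= F} ->
    exists q, [/\ cycle er (e :: q), uniq (e :: q) & {subset e :: q <= F}].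
  apply: (H (size F) [::]) => //; first by rewrite subn0.
  by move=> x; rewrite inE => /eqP ->.
elim=> [|k IH] q hk hp hq hs.
  case: (boolP (dst (last e q) == src e)) => [hcl|hop].
    by exists q; split => //=; rewrite rcons_path hp.
  case: (extend hb hu hp hq hs hop) => f hf /andP [hfn _].
  have : size (f :: e :: q) <= size F.
    apply: uniq_leq_size; first by rewrite cons_uniq hfn hq.
    by move=> x; rewrite inE => /orP [/eqP -> // | /hs].
  rewrite /=; lia.
case: (boolP (dst (last e q) == src e)) => [hcl|hop].
  by exists q; split => //=; rewrite rcons_path hp.
case: (extend hb hu hp hq hs hop) => f hf /andP [hfn hfs].
have hsz : size (f :: e :: q) <= size F.
  apply: uniq_leq_size; first by rewrite cons_uniq hfn hq.
  by move=> x; rewrite inE => /orP [/eqP -> // | /hs].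
apply: (IH (rcons q f)).
- rewrite size_rcons; move: hsz => /=; lia.
- by rewrite rcons_path hp /er eq_sym.
- by rewrite -rcons_cons rcons_uniq hfn hq.
- move=> x; rewrite -rcons_cons mem_rcons inE => /orP [/eqP -> // | /hs //].
Qed.

Lemma cycle_cat x a y b : cycle er (x :: a) -> cycle er (y :: b) -> src x = src y ->
  cycle er ((x :: a) ++ (y :: b)).
Proof.
rewrite /= rcons_path => /andP [h1 h3] h2 e.
rewrite rcons_cat cat_path h1 /= rcons_path.
move: h2; rewrite rcons_path => /andP [-> h4].
by move: h3 h4; rewrite /er e => -> ->.
Qed.

Lemma arith1 x y z w k : x - y <= k.+1 -> z = y -> x - (z + w.+1) <= k.
Proof. by lia. Qed.

Lemma euler (E : seq T) : balanced E -> uniq E -> conn E ->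
  exists c, cycle er c /\ perm_eq c E.
Proof.
move=> hb hu hcn.
have [->|[e0 he0]] : E = [::] \/ exists e0, e0 \in E.
  by case: E {hb hu hcn} => [|x s]; [left | right; exists x; rewrite inE eqxx].
  by exists [::].
suff H : forall k c, size E - size c <= k -> cycle er c -> uniq c ->
    {subset c <= E} -> c != [::] -> exists c, cycle er c /\ perm_eq c E.
  case: (closed_through hb hu he0) => q [h1 h2 h3].
  by apply: (H (size E) (e0 :: q)) => //; lia.
elim=> [|k IH] c hk hcyc uc sc nc.
  by exists c; split=> //; apply: full_perm => //; lia.
case: (ltnP (size c) (size E)) => hlt; last first.
  by exists c; split=> //; apply: full_perm.
set F := filter (fun f => f \notin c) E.
have hF : forall a : pred T, count a E = count a F + count a c.
  move=> a; rewrite (count_split a (fun x => x \in c)) count_in_sub // addnC.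
  by rewrite /F count_filter.
have hbc := cycle_balanced hcyc.
have hbF : balanced F.
  by move=> v; have := hF (fun e => src e == v); have := hF (fun e => dst e == v);
     rewrite hb hbc; lia.
have huF : uniq F := filter_uniq _ hu.
have [f0 hf0] : exists f0, f0 \in F.
  have : has (fun f => f \notin c) E.
    apply: contraT => /hasPn h.
    have := uniq_leq_size hu (fun x hx => negbNE (h x hx)); lia.
  by case/hasP => f hf hfc; exists f; rewrite mem_filter hfc hf.
set A := fun v => has (fun g => src g == v) c.
have hAd : forall g, g \in c -> A (dst g).
  move=> g hg; apply/hasP; exists (next c g); first by rewrite mem_next.
  by rewrite eq_sym; apply: next_cycle hcyc hg.
have [f hfF hAf] : exists2 f, f \in F & A (src f).
  case: (boolP (A (src f0))) => [h | h]; first by exists f0.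
  case: (hcn A).
  - have [g hg] : exists g, g \in c by case: (c) nc => // g c' _; exists g; rewrite inE eqxx.
    by exists g; [apply: sc | apply/hasP; exists g].
  - by exists f0 => //; move: hf0; rewrite mem_filter => /andP [].
  move=> g hgE hg.
  have hgc : g \notin c.
    apply: contra hg => hgc; rewrite (hAd g hgc); apply/eqP; apply/hasP.
    by exists g.
  have hgF : g \in F by rewrite mem_filter hgc.
  case: (boolP (A (src g))) => hsg; first by exists g.
  have hdg : A (dst g) by move: hg; rewrite (negbTE hsg); case: (A (dst g)).
  have : 0 < count (fun e => dst e == dst g) F.
    by rewrite -has_count; apply/hasP; exists g.
  rewrite -hbF -has_count => /hasP [f hf /eqP hfs].
  by exists f => //; rewrite hfs.
case/hasP: hAf => gc hgc /eqP hsrc.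
case: (rot_to hgc) => i s' hrot.
have hcyc' : cycle er (gc :: s') by rewrite -hrot rot_cycle.
have uc' : uniq (gc :: s') by rewrite -hrot rot_uniq.
case: (closed_through hbF huF hfF) => q [hq1 hq2 hq3].
apply: (IH ((gc :: s') ++ (f :: q))).
- rewrite size_cat; apply: (arith1 (y := size c)) => //.
  by rewrite -hrot size_rot.
- exact: cycle_cat.
- rewrite cat_uniq uc' hq2 andbT; apply/hasPn => x /hq3.
  by rewrite mem_filter -hrot mem_rot => /andP [].
- move=> x; rewrite mem_cat => /orP [|/hq3]; first by rewrite -hrot mem_rot; apply: sc.
  by rewrite mem_filter => /andP [].
- by [].
Qed.
End Euler.


Lemma red_rcons w w' M M' : red w = red w' -> all (fun x => x < M) w ->
  all (fun x => x < M') w' -> red (rcons w M) = red (rcons w' M').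
Proof.
move=> /red_cmp [hs hc] hw hw'.
apply: red_eq; rewrite !size_rcons ?hs // => i j hi hj.
rewrite !nth_rcons -hs.
case: (ltnP i (size w)) => hi'; case: (ltnP j (size w)) => hj'.
- exact: hc.
- have -> : j == size w by apply/eqP; lia.
  have hi'' : i < size w' by rewrite -hs.
  by rewrite (allP hw _ (mem_nth 0 hi')) (allP hw' _ (mem_nth 0 hi'')).
- have -> : i == size w by apply/eqP; lia.
  have hj'' : j < size w' by rewrite -hs.
  have h1 : nth 0 w j < M := allP hw _ (mem_nth 0 hj').
  have h2 : nth 0 w' j < M' := allP hw' _ (mem_nth 0 hj'').
  by apply/idP/idP => ?; lia.
- have -> : i == size w by apply/eqP; lia.
  have -> : j == size w by apply/eqP; lia.
  by rewrite !ltnn.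
Qed.

Lemma dst_rcons (u : seq nat) x : 0 < size u -> behead (rcons u x) = rcons (behead u) x.
Proof. by case: u. Qed.

Lemma balanced_PP n : 0 < n -> balanced (src n) dst (PP n).
Proof.
move=> hn v; rewrite (permP (perm_rot1 n)) count_map.
apply: eq_in_count => p hp /=; rewrite src_rot //.
by rewrite memPP in hp; exact: is_perm_size hp.
Qed.

Lemma src_perm n g : 0 < n -> g \in PP n -> is_perm n.-1 (src n g).
Proof.
rewrite memPP => hn hg; have hs := is_perm_size hg.
have := red_perm (take_uniq n.-1 (is_perm_uniq hg)).
by rewrite size_takel // hs; lia.
Qed.

Lemma walk_id n (A : pred (seq nat)) : 2 <= n ->
  (forall g, g \in PP n -> A (src n g) = A (dst g)) ->
  forall v, is_perm n.-1 v -> A v = A (iota 1 n.-1).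
Proof.
move=> hn hA v hv; set m := n.-1; have hnm : n = m.+1 by rewrite /m; lia.
have hvs : size v = m := is_perm_size hv.
set u := fun k => red (drop k v ++ iota n k).
have hvr : forall x, x \in v -> 0 < x <= m by move=> x; rewrite (is_perm_mem _ hv).
have uperm : forall k, k <= m -> is_perm m (u k).
  move=> k hk.
  have hsz : size (drop k v ++ iota n k) = m by rewrite size_cat size_drop size_iota; lia.
  rewrite /u -{1}hsz; apply: red_perm.
  rewrite cat_uniq drop_uniq ?(is_perm_uniq hv) ?iota_uniq //= andbT.
  apply/hasPn => x; rewrite mem_iota => hx; apply/negP => /mem_drop /hvr; lia.
have step : forall k, k < m -> A (u k) = A (u k.+1).
  move=> k hk; set h := rcons (u k) n.
  have up := uperm k (ltnW hk); have us := is_perm_size up.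
  have hh : h \in PP n.
    rewrite memPP; have -> : n = size h by rewrite size_rcons us.
    apply: perm_of_range.
      rewrite rcons_uniq (is_perm_uniq up) andbT (is_perm_mem _ up); lia.
    apply/allP => x; rewrite size_rcons us mem_rcons inE => /orP [/eqP -> /= | ].
      by lia.
    by rewrite (is_perm_mem _ up) /=; lia.
  have := hA h hh.
  have -> : src n h = u k.
    by rewrite /src /h -cats1 take_size_cat ?(perm_red up) // us.
  move=> ->; congr A.
  rewrite /dst /h dst_rcons ?us //; last by lia.
  have -> : u k.+1 = red (rcons (drop k.+1 v ++ iota n k) (n + k)).
    by rewrite /u rcons_cat -iota_rcons.
  apply: red_rcons.
  - rewrite /u -!drop1 red_drop drop_cat size_drop hvs.
    case: (ltnP 1 (m - k)) => h1.
      by rewrite drop_drop ?addn1 ?add1n.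
    have hk1 : m - k = 1 by lia.
    rewrite hk1 subnn drop0 drop_oversize ?hvs //; lia.
  - apply/allP => x /mem_behead; rewrite (is_perm_mem _ up); lia.
  - apply/allP => x; rewrite mem_cat mem_iota => /orP [/mem_drop /hvr | ]; lia.
have hu0 : u 0 = v by rewrite /u drop0 cats0 (perm_red hv).
have hum : u m = iota 1 m.
  by rewrite /u drop_oversize ?hvs // red_iota //; lia.
have gen : forall k, k <= m -> A (u 0) = A (u k).
  elim=> [//|k IH] hk; rewrite IH; last by lia.
  by apply: step; lia.
by rewrite -hu0 -hum (gen m (leqnn m)).
Qed.

Lemma conn_PP n l : 2 <= n -> l \in PP n -> src n l = dst l ->
  conn (src n) dst (rem l (PP n)).
Proof.
move=> hn hl hloop A [g1 hg1 hA1] [g2 hg2 hA2].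
case: (boolP (has (fun g => A (src n g) != A (dst g)) (rem l (PP n)))).
  by case/hasP => g hg hne; exists g.
move/hasPn => hall.
have hA : forall g, g \in PP n -> A (src n g) = A (dst g).
  move=> g hg; case: (eqVneq g l) => [->|hne]; first by rewrite hloop.
  have : g \in rem l (PP n) by rewrite (mem_rem_uniq _ (PP_uniq n)) inE hne.
  by move/hall; rewrite negbK => /eqP.
have hgP : forall g, g \in rem l (PP n) -> g \in PP n.
  by move=> g; rewrite (mem_rem_uniq _ (PP_uniq n)) => /andP [].
have e1 := walk_id hn hA (src_perm (ltnW hn) (hgP _ hg1)).
have e2 := walk_id hn hA (src_perm (ltnW hn) (hgP _ hg2)).
by move: hA2; rewrite e2 -e1 hA1.
Qed.

Lemma balanced_rem n l : 0 < n -> l \in PP n -> src n l = dst l ->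
  balanced (src n) dst (rem l (PP n)).
Proof.
move=> hn hl hloop v.
have hp := perm_to_rem hl.
have := balanced_PP hn v; rewrite !(permP hp) /= hloop; lia.
Qed.


Lemma red_cons x Y x' Y' : red Y = red Y' ->
  (forall j, j < size Y -> (x < nth 0 Y j) = (x' < nth 0 Y' j)) ->
  x \notin Y -> x' \notin Y' -> red (x :: Y) = red (x' :: Y').
Proof.
move=> /red_cmp [hs hc] hx nx nx'.
apply: red_eq => /=; first by rewrite hs.
case=> [|i] [|j] /= hi hj.
- by rewrite !ltnn.
- exact: hx.
- have n1 : nth 0 Y i != x by apply: contraNneq nx => <-; apply: mem_nth.
  have n2 : nth 0 Y' i != x' by apply: contraNneq nx' => <-; apply: mem_nth; rewrite -hs.
  move: (hx i hi) n1 n2.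
  case: (ltngtP x (nth 0 Y i)); case: (ltngtP x' (nth 0 Y' i)) => //= *; lia.
- exact: hc.
Qed.

Lemma LF_cons n x (s : seq nat) : 0 < n -> n <= size s ->
  later_factors n (x :: s) = take n (x :: s) :: later_factors n s.
Proof.
move=> hn hs; rewrite /later_factors /=.
have -> : (size s).+2 - n = ((size s).+1 - n).+1 by lia.
rewrite /=; congr cons.
rewrite (_ : iota 1 _ = map (addn 1) (iota 0 ((size s).+1 - n))); last by rewrite -iotaDl.
by rewrite -map_comp; apply: eq_map => i /=; rewrite ?add1n.
Qed.

Lemma take_cons_pred n x (s : seq nat) : 0 < n -> take n (x :: s) = x :: take n.-1 s.
Proof. by case: n. Qed.

Lemma LF_head n (t : seq nat) : n <= size t ->
  later_factors n t = take n t :: behead (later_factors n t).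
Proof.
move=> hs; rewrite /later_factors.
have -> : (size t).+1 - n = ((size t).+1 - n).-1.+1 by lia.
by rewrite /= drop0.
Qed.

Lemma LF_map n f (t : seq nat) :
  later_factors n (map f t) = map (map f) (later_factors n t).
Proof.
rewrite /later_factors size_map -map_comp; apply: eq_map => i /=.
by rewrite map_take map_drop.
Qed.

Lemma ar_mul2 x y : (2 * x < 2 * y) = (x < y). Proof. by apply/idP/idP; lia. Qed.
Lemma ar_odd a b : (2 * a + 1 < 2 * b) = (a < b). Proof. by apply/idP/idP; lia. Qed.
Lemma ar_pred k v : v != k -> 0 < k -> (k.-1 < v) = (k < v). Proof. by move=> h1 h2; apply/idP/idP; lia. Qed.
Lemma ar_predne k : 0 < k -> (k.-1 == k) = false. Proof. by move=> h; apply/eqP; lia. Qed.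
Lemma ar_89 a v : 0 < a -> 0 < v -> v != 1 -> (1 < 2 * a) = (1 < v). Proof. by move=> *; apply/idP/idP; lia. Qed.
Lemma ar_91 k n : 0 < k <= n -> k != 1 -> 0 < k.-1 <= n. Proof. by move=> *; lia. Qed.
Lemma ar_odd_ne a y : 2 * a + 1 = 2 * y -> False. Proof. by lia. Qed.
Lemma ar_one_ne y : 1 = 2 * y -> False. Proof. by lia. Qed.

Lemma realize n : 0 < n -> forall ps p, all (is_perm n) (p :: ps) ->
  sorted (er (src n) dst) (p :: ps) ->
  exists t, [/\ size t = n + size ps, all (fun x => 0 < x) t,
     map red (later_factors n t) = p :: ps & red (take n.-1 t) = src n p].
Proof.
move=> hn; elim=> [|q ps IH] p hall hsort.
  have hp : is_perm n p by move: hall => /= /andP [].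
  have hs := is_perm_size hp.
  exists p; split => //.
  - by rewrite hs addn0.
  - by apply/allP => x; rewrite (is_perm_mem _ hp) /=; lia.
  - rewrite /later_factors hs (_ : n.+1 - n = 1) /=; last by lia.
    by rewrite drop0 take_oversize ?hs // (perm_red hp).
move: hall => /= /andP [hp hall']; move: hsort => /= /andP [hpq hsort'].
have [t' [hs' hpos' hmap' hsrc']] := IH q hall' hsort'.
have hps : size p = n := is_perm_size hp.
have up := is_perm_uniq hp.
case: p hp hpq hps up => [|k r] hp hpq hps up; first by move: hps => /= ?; lia.
move: up => /= /andP [kr ur].
have hsr : size r = n.-1 by move: hps => /= ?; lia.
have hrr : red (take n.-1 t') = red r by rewrite hsrc'; move: hpq => /eqP <-.
set t'' := map (muln 2) t'.
set x := if k == 1 then 1 else 2 * nth 0 t' (index k.-1 r) + 1.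
have hsz' : n.-1 < size t' by rewrite hs'; lia.
have hY : red (take n.-1 t'') = red r.
  by rewrite /t'' -map_take red_map ?hrr // => ? ?; apply: ar_mul2.
have hcmp := red_cmp hrr.
have hpos_t' : forall j, j < size t' -> 0 < nth 0 t' j.
  by move=> j hj; apply: (allP hpos'); apply: mem_nth.
have hrng : forall y, y \in k :: r -> 0 < y <= n by move=> y; rewrite (is_perm_mem _ hp).
have hwin : red (x :: take n.-1 t'') = k :: r.
  rewrite -(perm_red hp); apply: red_cons => //.
  - move=> j; rewrite size_take size_map.
    case: (ltnP n.-1 (size t')) => [_ hj | hge]; last by rewrite leqNgt hsz' in hge.
    rewrite nth_take // (nth_map 0); last exact: ltn_trans hj hsz'.
    have hrj : nth 0 r j \in r by apply: mem_nth; rewrite hsr.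
    have hrj1 : 0 < nth 0 r j <= n by apply: hrng; rewrite inE hrj orbT.
    have hrjk : nth 0 r j != k by apply: contraNneq kr => <-.
    rewrite /x; case: (eqVneq k 1) => [hk1 | hk1].
      rewrite hk1 in hrjk *; case/andP: hrj1 => hrj1 _.
      exact: ar_89 (hpos_t' j (ltn_trans hj hsz')) hrj1 hrjk.
    have hkm : k.-1 \in r.
      have hk := hrng k (mem_head _ _).
      have : k.-1 \in k :: r by rewrite (is_perm_mem _ hp); exact: ar_91.
      by rewrite inE ar_predne //; case/andP: hk.
    set i := index k.-1 r.
    have hi : i < n.-1 by rewrite -hsr index_mem.
    have := hcmp.2 i j; rewrite size_take hsz' !nth_take // nth_index // => /(_ hi hj) e.
    rewrite ar_odd e (ar_pred hrjk) //.
    by case/andP: (hrng k (mem_head _ _)).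
  - rewrite /x /t'' -map_take; apply/negP => /mapP [y _].
    by case: (k == 1) => h; [apply: ar_one_ne h | apply: ar_odd_ne h].
have hsz'' : n <= size t'' by rewrite size_map hs'; lia.
exists (x :: t''); split.
- by rewrite /= size_map hs' /=; lia.
- rewrite /= /x; apply/andP; split; first by case: (k == 1); rewrite ?addn1.
  by apply/allP => y /mapP [z hz ->]; rewrite /= muln_gt0 (allP hpos' z hz).
- rewrite LF_cons // /= LF_map -map_comp.
  rewrite take_cons_pred //.
  rewrite hwin -hmap'; congr cons; apply: eq_map => w /=.
  by apply: red_map => ? ?; apply: ar_mul2.
- rewrite -(@take_takel _ n.-1 n (x :: t'') (leq_pred n)) take_cons_pred //.
  by rewrite -red_take hwin.
Qed.


Definition fcs a b sigma (pi : seq nat) :=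
  ((head 0 pi == a) || (head 0 pi == b)) && (red (behead pi) == sigma).

Lemma build n a b sigma ps : 2 <= n -> is_perm n.-1 sigma ->
  all (is_perm n) ps -> sorted (er (src n) dst) ps ->
  (ps != [::] -> src n (head [::] ps) = sigma) ->
  (forall pi, is_perm n pi -> fcs a b sigma pi + count (pred1 pi) ps = 1) ->
  exists t, upword n a b t /\ red (take n.-1 t) = sigma.
Proof.
move=> hn hsig hall hsort hhead hcnt.
have hss := is_perm_size hsig.
case: ps hall hsort hhead hcnt => [|p ps'] hall hsort hhead hcnt.
  have hred : red (take n.-1 sigma) = sigma.
    by rewrite take_oversize ?hss // (perm_red hsig).
  exists sigma; split => //; split.
  - by rewrite hss.
  - by apply/allP => x; rewrite (is_perm_mem _ hsig) /=; lia.
  - by rewrite take_oversize ?hss // (is_perm_uniq hsig).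
  - by rewrite /later_factors hss (_ : n.-1.+1 - n = 0) //; lia.
  - move=> pi hpi; rewrite /cover_count /first_covers hred.
    rewrite /later_factors hss (_ : n.-1.+1 - n = 0) /=; last by lia.
    by have := hcnt pi hpi; rewrite /= addn0.
have hn0 : 0 < n by lia.
have [t [hs hpos hmap hsrcp]] := realize hn0 hall hsort.
have hsig' : red (take n.-1 t) = sigma by rewrite hsrcp; apply: hhead.
have hnt : n <= size t by rewrite hs; lia.
have hp : is_perm n p by move: hall => /= /andP [].
exists t; split => //; split => //.
- by rewrite hs; lia.
- have := hmap; rewrite (LF_head hnt) => -[hw0 _].
  have : uniq (take n t) by move: (is_perm_uniq hp); rewrite -hw0 /red => /map_uniq.
  by rewrite -(@take_takel _ n.-1 n t (leq_pred n)); apply: take_uniq.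
- apply/allP => w hw.
  have : red w \in p :: ps' by rewrite -hmap; apply: map_f.
  move/(allP hall)/is_perm_uniq; rewrite /red; exact: map_uniq.
- move=> pi hpi; rewrite /cover_count /first_covers hsig'.
  rewrite (_ : count (fun w => red w == pi) _ = count (pred1 pi) (map red (later_factors n t))).
    by rewrite hmap; exact: (hcnt pi hpi).
  by rewrite [RHS]count_map.
Qed.

Lemma ext_id m : ext 1 (iota 1 m) = iota 1 m.+1.
Proof.
rewrite /ext /=; congr cons.
rewrite (_ : iota 2 m = map (addn 1) (iota 1 m)); last by rewrite -iotaDl.
apply/eq_in_map => x; rewrite mem_iota /bump => /andP [h1 _]; rewrite h1 /=; lia.
Qed.

Lemma src_iota m : src m.+1 (iota 1 m.+1) = iota 1 m.
Proof. by rewrite /src (_ : m.+1.-1 = m) // take_iota (_ : minn m m.+1 = m) ?red_iota //; lia. Qed.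

Lemma ext_rev m : ext m.+1 (rev (iota 1 m)) = rev (iota 1 m.+1).
Proof.
rewrite /ext iota_rcons rev_rcons add1n; congr cons.
transitivity (map id (rev (iota 1 m))); last exact: map_id.
apply/eq_in_map => x; rewrite mem_rev mem_iota /bump => h.
by rewrite (_ : (m.+1 <= x) = false) ?addn0 //; apply/negbTE; lia.
Qed.

Lemma src_rev m : src m.+1 (rev (iota 1 m.+1)) = rev (iota 1 m).
Proof.
rewrite /src /= rev_cons -cats1 take_size_cat ?size_rev ?size_iota //.
by rewrite red_rev red_iota.
Qed.

Lemma backward n a b sigma : 2 <= n -> 1 <= a -> a < b -> b <= n -> is_perm n.-1 sigma ->
  (a = 1 /\ sigma = iota 1 n.-1) \/ (b = n /\ sigma = rev (iota 1 n.-1)) ->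
  exists t, upword n a b t /\ red (take n.-1 t) = sigma.
Proof.
move=> hn ha hab hb hsig hcase.
have hn0 : 0 < n by lia.
set ea := ext a sigma; set eb := ext b sigma.
have pa : ea \in PP n by rewrite memPP; apply: ext_perm => //; lia.
have pb : eb \in PP n by rewrite memPP; apply: ext_perm => //; lia.
have dea : dst ea = sigma := dst_ext a hsig.
have deb : dst eb = sigma := dst_ext b hsig.
have hab' : ea != eb by apply/eqP => e; have := congr1 (head 0) e; rewrite /ea /eb /=; lia.
have hfc : forall pi, pi \in PP n -> fcs a b sigma pi = (pi == ea) || (pi == eb).
  move=> pi hpi; apply/idP/idP.
    case/andP => hh /eqP hd.
    have hpi' : is_perm n pi by rewrite -memPP.
    have := perm_ext_eq hn0 hpi'; rewrite /dst hd => e.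
    by case/orP: hh => /eqP hh; rewrite e hh eqxx ?orbT.
  have dea' : red (behead ea) = sigma := dea.
  have deb' : red (behead eb) = sigma := deb.
  case/orP => /eqP ->; rewrite /fcs ?dea' ?deb' /ea /eb /= !eqxx ?orbT //.
set m := n.-1 in hsig hcase *; have hnm : n = m.+1 by rewrite /m; lia.
have [l [e [hl he hle hloop [hde hchar]]]] : exists l e, [/\ l \in PP n, e \in PP n,
    l != e, src n l = dst l & dst e = sigma /\
    forall pi, pi \in PP n -> fcs a b sigma pi = (pi == l) || (pi == e)].
  case: hcase => [[ha1 hs1] | [hbn hs2]].
    exists ea, eb; split => //.
    rewrite dea; have -> : ea = iota 1 n by rewrite /ea ha1 hs1 ext_id hnm.
    by rewrite hnm src_iota hs1.
  exists eb, ea; split => //; first by rewrite eq_sym.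
    rewrite deb; have -> : eb = rev (iota 1 n) by rewrite /eb hbn hs2 hnm ext_rev.
    by rewrite hnm src_rev hs2.
  by split => // pi /hfc ->; rewrite orbC.
have [c [hcyc hpc]] := euler (balanced_rem hn0 hl hloop) (rem_uniq l (PP_uniq n))
                              (conn_PP hn hl hloop).
have hmemc : forall x, (x \in c) = (x != l) && (x \in PP n).
  by move=> x; rewrite (perm_mem hpc) (mem_rem_uniq _ (PP_uniq n)) inE.
have hec : e \in c by rewrite hmemc eq_sym hle he.
case: (rot_to hec) => i s' hrot.
have hcyc' : cycle (er (src n) dst) (e :: s') by rewrite -hrot rot_cycle.
move: (hcyc') => /=; rewrite rcons_path => /andP [hpath hlast].
apply: (@build n a b sigma s') => //.
- apply/allP => x hx.
  have : x \in c by rewrite -(mem_rot i) hrot inE hx orbT.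
  by rewrite hmemc memPP => /andP [].
- exact: path_sorted hpath.
- move: hpath; case: (s') => // h s'' /= /andP [/eqP <- _] _; exact: hde.
- move=> pi hpi; rewrite hchar ?memPP //.
  have hpr : perm_eq (e :: s') (rem l (PP n)) by rewrite -hrot perm_rot.
  have c1 := permP hpr (pred1 pi).
  have c2 := permP (perm_to_rem hl) (pred1 pi).
  have c3 : count (pred1 pi) (PP n) = 1.
    by have := count_uniq_mem pi (PP_uniq n); rewrite memPP hpi.
  have key : (e == pi) + count_mem pi s' + (l == pi) = 1.
    have c1' : (e == pi) + count_mem pi s' = count_mem pi (rem l (PP n)) := c1.
    have c2' : count_mem pi (PP n) = (l == pi) + count_mem pi (rem l (PP n)) := c2.
    by rewrite c1' addnC -c2' c3.
  rewrite (eq_sym pi l) (eq_sym pi e).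
  move: key hle; clear; move=> key hle.
  move: key; case: (eqVneq l pi) => [hlp|_]; case: (eqVneq e pi) => [hep|_] /= key.
  - by move: hle; rewrite hlp hep eqxx.
  - lia.
  - lia.
  - lia.
Qed.

Theorem theorem5 (n a b : nat) (sigma : seq nat) :
  2 <= n -> 1 <= a -> a < b -> b <= n -> is_perm n.-1 sigma ->
  (exists t : seq nat, upword n a b t /\ red (take n.-1 t) = sigma) <->
  ((a = 1 /\ sigma = iota 1 n.-1) \/ (b = n /\ sigma = rev (iota 1 n.-1))).
Proof.
move=> hn ha hab hb hsig; split.
  by case=> t [hup <-]; exact: forward hn ha hab hb hup.
exact: backward.
Qed.
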